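(* Suppose $(\mathcal W,\mathcal W,\mu)$ is a reduced system of the FTvN system $(\mathcal V,\mathcal W,\lambda)$. Let $C_{\mathcal V}$ and $C_{\mathcal W}$ denote the centers of $(\mathcal V,\mathcal W,\lambda)$ and $(\mathcal W,\mathcal W,\mu)$ respectively. Then: (a) $\operatorname{ran}\mu=\operatorname{ran}\lambda$ and $\mu^2=\mu$. (b) $\lambda(C_{\mathcal V})=\mu(C_{\mathcal W})=C_{\mathcal W}$. (c) $\dim C_{\mathcal V}=\dim\lambda(C_{\mathcal V})=\dim\mu(C_{\mathcal W})=\dim C_{\mathcal W}$. (d) $e$ is a unit element of $(\mathcal V,\mathcal W,\lambda)$ if and only if $\lambda(e)$ is a unit element of $(\mathcal W,\mathcal W,\mu)$.
   Context: A Fan-Theobald-von Neumann (FTvN) system is a triple $(\mathcal V,\mathcal W,\lambda)$ where $\mathcal V,\mathcal W$ are real inner product spaces and $\lambda:\mathcal V\to\mathcal W$ is a map such that: (A1) $\|\lambda(x)\|=\|x\|$ for all $x$; (A2) $\langle x,y\rangle\le\langle\lambda(x),\lambda(y)\rangle$ for all $x,y$; (A3) for every $c\in\mathcal V$ and $q\in\lambda(\mathcal V)$ there exists $x$ with $\lambda(x)=q$ and $\langle c,x\rangle=\langle\lambda(c),\lambda(x)\rangle$. In a FTvN system, $x,y$ commute if $\langle x,y\rangle=\langle\lambda(x),\lambda(y)\rangle$; the center is the set of elements commuting with every element; a unit element is a nonzero $e$ such that the center equals $\mathbb Re$. A FTvN system $(\mathcal W,\mathcal W,\mu)$ is a reduced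 system of $(\mathcal V,\mathcal W,\lambda)$ if (C1) $\mu\circ\lambda=\lambda$ and (C2) $\operatorname{ran}\mu\subseteq\operatorname{ran}\lambda$. *)

(* Defs.v *)
From HB Require Import structures.
From mathcomp Require Import all_boot all_order all_algebra.
From mathcomp Require Import reals.
Set Implicit Arguments. Unset Strict Implicit. Unset Printing Implicit Defensive.
Import Order.TTheory GRing.Theory Num.Theory.
Local Open Scope ring_scope.

Section FTvN.
Variable R : realType.

Definition is_inner_product (V : lmodType R) (ip : V -> V -> R) : Prop :=
  [/\ (forall x y, ip x y = ip y x),
      (forall (a : R) x y z, ip (a *: x + y) z = a * ip x z + ip y z) &
      (forall x, x != 0 -> 0 < ip x x)].

Definition ipnorm (V : lmodType R) (ip : V -> V -> R) (x : V) : R :=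
  Num.sqrt (ip x x).

Definition FTvN_system (V W : lmodType R) (ipV : V -> V -> R)
    (ipW : W -> W -> R) (lam : V -> W) : Prop :=
  [/\ is_inner_product ipV, is_inner_product ipW,
      (forall x, ipnorm ipW (lam x) = ipnorm ipV x),
      (forall x y, ipV x y <= ipW (lam x) (lam y)) &
      (forall (c : V) (q : W), (exists u, lam u = q) ->
         exists x, lam x = q /\ ipV c x = ipW (lam c) (lam x))].

Definition ftvn_commute (V W : lmodType R) (ipV : V -> V -> R)
    (ipW : W -> W -> R) (lam : V -> W) (x y : V) : Prop :=
  ipV x y = ipW (lam x) (lam y).

Definition ftvn_center (V W : lmodType R) (ipV : V -> V -> R)
    (ipW : W -> W -> R) (lam : V -> W) (x : V) : Prop :=
  forall y, ftvn_commute ipV ipW lam x y.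

Definition ftvn_unit (V W : lmodType R) (ipV : V -> V -> R)
    (ipW : W -> W -> R) (lam : V -> W) (e : V) : Prop :=
  e != 0 /\ (forall x, ftvn_center ipV ipW lam x <-> exists a : R, x = a *: e).

Definition reduced_system (V W : lmodType R) (ipV : V -> V -> R)
    (ipW : W -> W -> R) (lam : V -> W) (mu : W -> W) : Prop :=
  [/\ FTvN_system ipW ipW mu,
      (forall x, mu (lam x) = lam x) &
      (forall w, exists x, mu w = lam x)].

End FTvN.

(* Main.v *)
Require Import Defs.
From HB Require Import structures.
From mathcomp Require Import all_boot all_order all_algebra.
From mathcomp Require Import reals.
From mathcomp Require Import ring lra zify.
From Stdlib Require Import Classical.
Import Order.TTheory GRing.Theory Num.Theory.
Local Open Scope ring_scope.
Set Implicit Arguments. Unset Strict Implicit.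

Section IP.
Variable R : realType.
Variables (U : lmodType R) (ip : U -> U -> R).
Hypothesis Hip : is_inner_product ip.

Lemma ipC x y : ip x y = ip y x. Proof. by case: Hip. Qed.
Lemma ipDl x y z : ip (x + y) z = ip x z + ip y z.
Proof. case: Hip => _ HL _; by have := HL 1 x y z; rewrite scale1r mul1r. Qed.
Lemma ip0l z : ip 0 z = 0.
Proof. have h := ipDl 0 0 z; rewrite addr0 in h; lra. Qed.
Lemma ipZl a x z : ip (a *: x) z = a * ip x z.
Proof. case: Hip => _ HL _; by have := HL a x 0 z; rewrite addr0 ip0l addr0. Qed.
Lemma ipNl x z : ip (- x) z = - ip x z.
Proof. by rewrite -scaleN1r ipZl mulN1r. Qed.
Lemma ipBl x y z : ip (x - y) z = ip x z - ip y z.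
Proof. by rewrite ipDl ipNl. Qed.
Lemma ipDr x y z : ip z (x + y) = ip z x + ip z y.
Proof. by rewrite ipC ipDl ![ip _ z]ipC. Qed.
Lemma ipZr a x z : ip z (a *: x) = a * ip z x.
Proof. by rewrite ipC ipZl ipC. Qed.
Lemma ipNr x z : ip z (- x) = - ip z x.
Proof. by rewrite ipC ipNl ipC. Qed.
Lemma ipBr x y z : ip z (x - y) = ip z x - ip z y.
Proof. by rewrite ipDr ipNr. Qed.
Lemma ip0r z : ip z 0 = 0.
Proof. by rewrite ipC ip0l. Qed.
Lemma ip_ge0 x : 0 <= ip x x.
Proof.
case: (eqVneq x 0) => [->|nz]; first by rewrite ip0l.
by case: Hip => _ _ /(_ x nz) /ltW.
Qed.
Lemma ip_eq0 x : ip x x = 0 -> x = 0.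
Proof.
case: (eqVneq x 0) => // nz; case: Hip => _ _ /(_ x nz) h e.
by rewrite e ltxx in h.
Qed.
Lemma ip_expand p a u v :
  ip (p - (a *: u + v)) (p - (a *: u + v)) =
  ip p p - a * ip p u - ip p v - a * ip u p - ip v p
  + a * (a * ip u u + ip u v) + (a * ip v u + ip v v).
Proof.
rewrite !(ipBl, ipBr, ipDl, ipDr, ipZl, ipZr). ring.
Qed.
End IP.

Section FT.
Variable R : realType.
Variables (V W : lmodType R) (ipV : V -> V -> R) (ipW : W -> W -> R) (lam : V -> W).
Hypothesis H : FTvN_system ipV ipW lam.

Let HV : is_inner_product ipV. Proof. by case: H. Qed.
Let HW : is_inner_product ipW. Proof. by case: H. Qed.
Local Notation C := (ftvn_center ipV ipW lam).

Lemma ftA2 x y : ipV x y <= ipW (lam x) (lam y). Proof. by case: H. Qed.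

Lemma ftnorm x : ipW (lam x) (lam x) = ipV x x.
Proof.
case: H => _ _ hn _ _; have := hn x; rewrite /ipnorm => e.
by rewrite -(sqr_sqrtr (ip_ge0 HW _)) -(sqr_sqrtr (ip_ge0 HV x)) e.
Qed.

Lemma ftlam0 : lam 0 = 0.
Proof. by apply: (ip_eq0 HW); rewrite ftnorm ip0l. Qed.

Lemma ftlam_eq0 x : lam x = 0 -> x = 0.
Proof. by move=> e; apply: (ip_eq0 HV); rewrite -ftnorm e ip0l. Qed.

Lemma ftC0 : C 0.
Proof. by move=> y; rewrite /ftvn_commute ftlam0 !ip0l. Qed.

Lemma ftCsym x y : C x -> ipV y x = ipW (lam y) (lam x).
Proof. by move=> hx; rewrite (ipC HV) hx (ipC HW). Qed.

Lemma ftlin a x y : C x -> C y -> lam (a *: x + y) = a *: lam x + lam y.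
Proof.
move=> hx hy; apply/eqP; rewrite -subr_eq0; apply/eqP; apply: (ip_eq0 HW).
rewrite ip_expand // -(ftCsym (a *: x + y) hx) -(ftCsym (a *: x + y) hy).
rewrite -(hx (a *: x + y)) -(hy (a *: x + y)) -(hx y) -(hy x) !ftnorm.
by rewrite -(ip_expand HV) subrr ip0l.
Qed.

Lemma ftClin a x y : C x -> C y -> C (a *: x + y).
Proof.
move=> hx hy z; rewrite /ftvn_commute ftlin // (ipDl HV) (ipZl HV) (ipDl HW) (ipZl HW).
by rewrite hx hy.
Qed.

Lemma ftCN x : C x -> C (- x).
Proof. by move=> hx; rewrite -[- x]addr0 -scaleN1r; apply: ftClin => //; apply: ftC0. Qed.

Lemma ftlamN x : C x -> lam (- x) = - lam x.
Proof.
by move=> hx; rewrite -[- x]addr0 -scaleN1r ftlin ?ftlam0 ?addr0 ?scaleN1r //; apply: ftC0.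
Qed.

Lemma ftlamZ a x : C x -> lam (a *: x) = a *: lam x.
Proof.
by move=> hx; rewrite -[a *: x]addr0 ftlin ?ftlam0 ?addr0 //; apply: ftC0.
Qed.

Lemma ftinj x y : C x -> C y -> lam x = lam y -> x = y.
Proof.
move=> hx hy e; apply/eqP; rewrite -subr_eq0; apply/eqP; apply: ftlam_eq0.
by rewrite addrC -scaleN1r ftlin // e scaleN1r addNr.
Qed.

End FT.

Section Red.
Variable R : realType.
Variables (V W : lmodType R) (ipV : V -> V -> R) (ipW : W -> W -> R) (lam : V -> W) (mu : W -> W).
Hypothesis H : FTvN_system ipV ipW lam.
Hypothesis Hm : FTvN_system ipW ipW mu.
Hypothesis Hml : forall x, mu (lam x) = lam x.
Hypothesis Hmr : forall w, exists x, mu w = lam x.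

Let HV : is_inner_product ipV. Proof. by case: H. Qed.
Let HW : is_inner_product ipW. Proof. by case: H. Qed.
Local Notation C := (ftvn_center ipV ipW lam).
Local Notation Cm := (ftvn_center ipW ipW mu).

Lemma rd_idem w : mu (mu w) = mu w.
Proof. by case: (Hmr w) => x ->; rewrite Hml. Qed.

Lemma rd_fix w : Cm w -> mu w = w.
Proof.
move=> hw; apply/eqP; rewrite -subr_eq0; apply/eqP; apply: (ip_eq0 HW).
rewrite (ipBl HW) !(ipBr HW) (ftnorm Hm) (ipC HW (mu w) w).
have e : ipW w (mu w) = ipW w w by rewrite hw rd_idem (ftnorm Hm).
rewrite e; lra.
Qed.

Lemma rd_dir1 x : C x -> Cm (lam x).
Proof.
move=> hx z; rewrite /ftvn_commute Hml; apply/eqP; rewrite eq_le; apply/andP; split.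
  by have := ftA2 Hm (lam x) z; rewrite Hml.
have := ftA2 Hm (- lam x) z.
rewrite -(ftlamN H hx) Hml (ftlamN H hx) (ipNl HW) (ipNl HW); lra.
Qed.

Lemma rd_ex w : Cm w -> exists x, lam x = w.
Proof. by move=> hw; case: (Hmr w) => x e; exists x; rewrite -e rd_fix. Qed.

Lemma rd_dir2 w x : Cm w -> lam x = w -> C x.
Proof.
move=> hw hx.
have hnw := ftCN Hm hw.
have [x'' hx''] := rd_ex hnw.
have [_ _ _ _ A3] := H.
have [x' [hx' hc]] := A3 x (- w) (ex_intro _ x'' hx'').
have ex' : x' = - x.
  apply/eqP; rewrite -subr_eq0 opprK; apply/eqP; apply: (ip_eq0 HV).
  rewrite !(ipDl HV, ipDr HV) -!(ftnorm H) hx' hx (ipC HV x' x) hc hx hx'.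
  rewrite !(ipNl HW, ipNr HW) opprK; lra.
move=> y; rewrite /ftvn_commute; apply/eqP; rewrite eq_le; apply/andP; split.
  exact: (ftA2 H x y).
have := ftA2 H x' y; rewrite hx' ex' (ipNl HV) (ipNl HW) hx; lra.
Qed.

End Red.

Section VS.
Variable R : realType.

Lemma exists_vspace (U : vectType R) (P : U -> Prop) :
  P 0 -> (forall a x y, P x -> P y -> P (a *: x + y)) ->
  exists S : {vspace U}, forall x, x \in S <-> P x.
Proof.
move=> P0 Pc.
suff: forall n (S : {vspace U}), (\dim {:U} - \dim S <= n)%N ->
    (forall x, x \in S -> P x) -> exists S' : {vspace U}, forall x, x \in S' <-> P x.
  move=> /(_ (\dim {:U}) 0%VS); apply; first by rewrite leq_subr.
  by move=> x; rewrite memv0 => /eqP ->.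
elim=> [|n IH] S hS hSP;
  (case: (classic (forall x, P x -> x \in S)) => [hall|hn];
   first by exists S => x; split; [apply: hSP|apply: hall]);
  move: hn => /not_all_ex_not [x hx]; have [px nx] := imply_to_and _ _ hx.
- have lt : (\dim S < \dim (S + <[x]>))%N.
    rewrite ltnNge; apply/negP => hle.
    have /eqP e : S == (S + <[x]>)%VS by rewrite eqEdim addvSl hle.
    apply: nx; rewrite e; apply/memv_addP; exists 0; rewrite ?mem0v //.
    by exists x; rewrite ?memv_line ?add0r.
  have := dimvS (subvf (S + <[x]>)%VS).
  move: hS; rewrite leqn0 subn_eq0 => hS h.
  have := leq_trans h hS; by rewrite leqNgt lt.
- have lt : (\dim S < \dim (S + <[x]>))%N.
    rewrite ltnNge; apply/negP => hle.
    have /eqP e : S == (S + <[x]>)%VS by rewrite eqEdim addvSl hle.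
    apply: nx; rewrite e; apply/memv_addP; exists 0; rewrite ?mem0v //.
    by exists x; rewrite ?memv_line ?add0r.
  have hS'P : forall y, y \in (S + <[x]>)%VS -> P y.
    move=> y /memv_addP [u hu [v /vlineP [k ->] ->]].
    by rewrite addrC; apply: Pc => //; apply: hSP.
  apply: (IH (S + <[x]>)%VS) => //.
  have := dimvS (subvf (S + <[x]>)%VS) => h.
  lia.
Qed.

End VS.

Section Dim.
Variable R : realType.
Variables (U1 U2 : vectType R) (S1 : {vspace U1}) (S2 : {vspace U2}) (f : U1 -> U2).
Hypothesis flin : forall a x y, x \in S1 -> y \in S1 -> f (a *: x + y) = a *: f x + f y.

Lemma f0 : f 0 = 0.
Proof.
have := flin 1 (mem0v S1) (mem0v S1); rewrite !scale1r addr0 => e.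
by apply/eqP; rewrite -(addrI (f 0) (etrans (addr0 _) e)).
Qed.

Lemma f_sum n (k : 'I_n -> R) (g : 'I_n -> U1) : (forall i, g i \in S1) ->
  f (\sum_(i < n) k i *: g i) = \sum_(i < n) k i *: f (g i).
Proof.
move=> hg.
suff: (\sum_(i < n) k i *: g i) \in S1 /\ f (\sum_(i < n) k i *: g i) = \sum_(i < n) k i *: f (g i) by case.
apply: (big_rec2 (fun s t => s \in S1 /\ f s = t)); first by rewrite mem0v f0.
move=> i s t _ [hs <-]; split; first by rewrite memvD // memvZ.
by rewrite flin.
Qed.

Lemma dim_le_inj : (forall x, x \in S1 -> f x \in S2) ->
  (forall x, x \in S1 -> f x = 0 -> x = 0) -> (\dim S1 <= \dim S2)%N.
Proof.
move=> fS finj.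
set X := vbasis S1.
have XS : forall i : 'I_(\dim S1), X`_i \in S1.
  by move=> i; apply: vbasis_mem; apply: mem_nth; rewrite size_tuple.
have fY : free (map_tuple f X).
  apply/freeP => k hk i.
  have e : \sum_(i < \dim S1) k i *: X`_i = 0.
    apply: finj; first by apply: memv_suml => j _; rewrite memvZ.
    rewrite f_sum //; apply: etrans hk; apply: eq_bigr => j _.
    by rewrite (nth_map 0) // size_tuple.
  by move/freeP: (basis_free (vbasisP S1)) => /(_ k e i).
have sub : (<<map_tuple f X>> <= S2)%VS.
  by apply/span_subvP => y /mapP [x hx ->]; apply: fS; apply: vbasis_mem.
have := dimvS sub; move: fY; rewrite /free => /eqP ->.
by rewrite size_tuple.
Qed.

Lemma dim_le_surj : (forall y, y \in S2 -> exists2 x, x \in S1 & f x = y) ->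
  (\dim S2 <= \dim S1)%N.
Proof.
move=> fs.
set X := vbasis S1.
have XS : forall i : 'I_(\dim S1), X`_i \in S1.
  by move=> i; apply: vbasis_mem; apply: mem_nth; rewrite size_tuple.
have sub : (S2 <= <<map_tuple f X>>)%VS.
  apply/subvP => y /fs [x hx <-].
  rewrite (coord_vbasis hx) f_sum //; apply: memv_suml => i _; apply: memvZ.
  apply: memv_span; apply/mapP; exists X`_i => //.
  by apply: mem_nth; rewrite size_tuple.
apply: (leq_trans (dimvS sub)); apply: (leq_trans (dim_span _)).
by rewrite size_tuple.
Qed.

End Dim.
Theorem proposition10p2 (R : realType) (V W : vectType R)
    (ipV : V -> V -> R) (ipW : W -> W -> R) (lam : V -> W) (mu : W -> W) :
  FTvN_system ipV ipW lam ->
  reduced_system ipV ipW lam mu ->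
  (* (a) ran mu = ran lam and mu^2 = mu *)
  ((forall w, (exists w', mu w' = w) <-> (exists x, lam x = w)) /\
   (forall w, mu (mu w) = mu w)) /\
  (* (b) lam(C_V) = C_W and mu(C_W) = C_W *)
  (forall w,
     ((exists x, ftvn_center ipV ipW lam x /\ lam x = w) <-> ftvn_center ipW ipW mu w) /\
     ((exists w', ftvn_center ipW ipW mu w' /\ mu w' = w) <-> ftvn_center ipW ipW mu w)) /\
  (* (c) the four sets are subspaces of equal dimension *)
  (exists (UV : {vspace V}) (UlV UmW UW : {vspace W}),
     (forall x, x \in UV <-> ftvn_center ipV ipW lam x) /\
     (forall w, w \in UlV <-> exists x, ftvn_center ipV ipW lam x /\ lam x = w) /\
     (forall w, w \in UmW <-> exists w', ftvn_center ipW ipW mu w' /\ mu w' = w) /\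
     (forall w, w \in UW <-> ftvn_center ipW ipW mu w) /\
     \dim UV = \dim UlV /\ \dim UlV = \dim UmW /\ \dim UmW = \dim UW) /\
  (* (d) unit elements correspond *)
  (forall e : V, ftvn_unit ipV ipW lam e <-> ftvn_unit ipW ipW mu (lam e)).
Proof.
move=> H [Hm Hml Hmr].
have HV : is_inner_product ipV by case: H.
have HW : is_inner_product ipW by case: H.
have CZ : forall a x, ftvn_center ipV ipW lam x -> ftvn_center ipV ipW lam (a *: x).
  by move=> a x hx; rewrite -[a *: x]addr0; apply: (ftClin H) => //; apply: ftC0.
split.
  split=> [w|w]; last exact: rd_idem.
  split=> [[w' <-]|[x <-]]; first by case: (Hmr w') => x ->; exists x.
  by exists (lam x); rewrite Hml.
split.
  move=> w; split; split.
  - by move=> [x [hx <-]]; exact: (rd_dir1 H Hm Hml hx).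
  - move=> hw; have [x hx] := rd_ex H Hm Hml Hmr hw.
    by exists x; split => //; apply: (rd_dir2 H Hm Hml Hmr hw hx).
  - by move=> [w' [hw' <-]]; rewrite (rd_fix H Hm Hml Hmr hw').
  - by move=> hw; exists w; split => //; rewrite (rd_fix H Hm Hml Hmr hw).
split.
  have [UV hUV] := exists_vspace (ftC0 H) (fun a x y => ftClin H a (x:=x) (y:=y)).
  have [UW hUW] := exists_vspace (ftC0 Hm) (fun a x y => ftClin Hm a (x:=x) (y:=y)).
  have eqW : forall w, w \in UW <-> exists x, ftvn_center ipV ipW lam x /\ lam x = w.
    move=> w; rewrite hUW; split.
    - move=> hw; have [x hx] := rd_ex H Hm Hml Hmr hw.
      by exists x; split => //; apply: (rd_dir2 H Hm Hml Hmr hw hx).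
    - by move=> [x [hx <-]]; exact: (rd_dir1 H Hm Hml hx).
  have eqW2 : forall w, w \in UW <-> exists w', ftvn_center ipW ipW mu w' /\ mu w' = w.
    move=> w; rewrite hUW; split.
    - by move=> hw; exists w; split => //; rewrite (rd_fix H Hm Hml Hmr hw).
    - by move=> [w' [hw' <-]]; rewrite (rd_fix H Hm Hml Hmr hw').
  exists UV, UW, UW, UW; do 4 (split => //).
  split=> //; apply/eqP; rewrite eqn_leq; apply/andP; split.
  - apply: (@dim_le_inj _ _ _ _ _ lam).
    + by move=> a x y /hUV hx /hUV hy; exact: (ftlin H a hx hy).
    + by move=> x /hUV hx; apply/hUW; exact: (rd_dir1 H Hm Hml hx).
    + by move=> x _; exact: (ftlam_eq0 H).
  - apply: (@dim_le_surj _ _ _ _ _ lam).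
    + by move=> a x y /hUV hx /hUV hy; exact: (ftlin H a hx hy).
    + by move=> w /eqW [x [hx <-]]; exists x => //; apply/hUV.
move=> e; split.
- move=> [ne hc].
  have Ce : ftvn_center ipV ipW lam e by apply: (hc _).2; exists 1; rewrite scale1r.
  split; first by apply/eqP => /(ftlam_eq0 H) e0; rewrite e0 eqxx in ne.
  move=> w; split.
  + move=> hw; have [x hx] := rd_ex H Hm Hml Hmr hw.
    have Cx := rd_dir2 H Hm Hml Hmr hw hx.
    have [a ea] := (hc x).1 Cx.
    by exists a; rewrite -hx ea (ftlamZ H).
  + by move=> [a ->]; rewrite -(ftlamZ H) //; exact: (rd_dir1 H Hm Hml (CZ a e Ce)).
- move=> [ne hc].
  have Cle : ftvn_center ipW ipW mu (lam e) by apply: (hc _).2; exists 1; rewrite scale1r.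
  have Ce := rd_dir2 H Hm Hml Hmr Cle (erefl _).
  split; first by apply/eqP => e0; rewrite e0 (ftlam0 H) eqxx in ne.
  move=> x; split.
  + move=> hx; have [a ea] := (hc (lam x)).1 (rd_dir1 H Hm Hml hx).
    exists a; apply: (ftinj H) => //; first exact: CZ.
    by rewrite (ftlamZ H).
  + by move=> [a ->]; apply: CZ.
Qed.
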